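(* If $n_1=\dots=n_Q=n/Q$, then $\boldsymbol{c}_q[h]=\boldsymbol{b}_q[\mathcal{F}_h]$ for all $q,h$, $\hat{\boldsymbol{\theta}}_x[h]=\hat{\boldsymbol{\tau}}_x[\mathcal{F}_h]$, and $M_h=\frac{n}{4}\sum_{f\in\mathcal{F}_h}\hat{\boldsymbol{\tau}}_{x,f}'\boldsymbol{S}_{xx}^{-1}\hat{\boldsymbol{\tau}}_{x,f}$.
   Context: Setup ($2^K$ factorial experiment, finite population). $K\ge1$ two-level factors, $Q=2^K$ treatment combinations $q=1,\dots,Q$; combination $q$ sets factor $k$ at $\iota_k(q)\in\{-1,+1\}$, bijectively onto $\{-1,+1\}^K$. $F=Q-1$ factorial effects, one per nonempty $A\subseteq\{1,\dots,K\}$, enumerated $f=1,\dots,F$, with $g_{fq}=\prod_{k\in A}\iota_k(q)$; $\boldsymbol{b}_q=(g_{1q},\dots,g_{Fq})'$. Units $i=1,\dots,n$ with covariates $\boldsymbol{x}_i\in\mathbb{R}^L$; $\boldsymbol{S}_{xx}$ their finite-population covariance (divisor $n-1$, nonsingular). Treatment groups of sizes $n_q\ge1$; $\hat{\bar{\boldsymbol{x}}}(q)$ is the covariate mean in group $q$; $\hat{\boldsymbol{\tau}}_{x,f}=2^{-(K-1)}\sum_qg_{fq}\hat{\bar{\boldsymbol{x}}}(q)$; $\hat{\boldsymbol{\tau}}_x[\mathcal{I}]$ is the concatenation of $\hat{\boldsymbol{\tau}}_{x,f}$, $f\in\mathcal{I}$ (in increasing order). Tiers: partition $\{1,\dots,F\}$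 into disjoint nonempty $\mathcal{F}_1,\dots,\mathcal{F}_H$, $\mathcal{F}_{\overline h}=\bigcup_{l\le h}\mathcal{F}_l$. $\tilde{\boldsymbol{B}}=2^{-2(K-1)}\sum_qn_q^{-1}\boldsymbol{b}_q\boldsymbol{b}_q'$; $\boldsymbol{b}_q[\mathcal{I}]$ subvector, $\tilde{\boldsymbol{B}}[\mathcal{I},\mathcal{J}]$ submatrix. $\boldsymbol{c}_q[1]=\boldsymbol{b}_q[\mathcal{F}_1]$, and for $h\ge2$, $\boldsymbol{c}_q[h]=\boldsymbol{b}_q[\mathcal{F}_h]-\tilde{\boldsymbol{B}}[\mathcal{F}_h,\mathcal{F}_{\overline{h-1}}]\{\tilde{\boldsymbol{B}}[\mathcal{F}_{\overline{h-1}},\mathcal{F}_{\overline{h-1}}]\}^{-1}\boldsymbol{b}_q[\mathcal{F}_{\overline{h-1}}]$. $\hat{\boldsymbol{\theta}}_x[h]=2^{-(K-1)}\sum_q\boldsymbol{c}_q[h]\otimes\hat{\bar{\boldsymbol{x}}}(q)$, $\boldsymbol{W}_{xx}[h]=2^{-2(K-1)}\sum_qn_q^{-1}(\boldsymbol{c}_q[h]\boldsymbol{c}_q[h]')\otimes\boldsymbol{S}_{xx}$, $M_h=\hat{\boldsymbol{\theta}}_x[h]'\boldsymbol{W}_{xx}[h]^{-1}\hat{\boldsymbol{\theta}}_x[h]$. *)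

(* Defs.v *)
From HB Require Import structures.
From mathcomp Require Import all_boot all_order all_algebra.
From mathcomp Require Import mxtens.
Set Implicit Arguments. Unset Strict Implicit. Unset Printing Implicit Defensive.
Import Order.TTheory GRing.Theory Num.Theory.
Local Open Scope ring_scope.

(* Conventions:
   - treatment combinations q are indexed by 'I_(2^K); the level of factor k
     in combination q is  iota q k : bool  (true = +1, false = -1);
   - factorial effects f are indexed by 'I_(2^K).-1, effect f corresponds to
     the nonempty set  A f : {set 'I_K}  of factors;
   - units i : 'I_n, covariates x i : 'cV[R]_L, assignment Z i : 'I_(2^K). *)

Definition sgn (R : ringType) (b : bool) : R := if b then 1 else -1.

Definition gfq (R : ringType) (K : nat) (iota : 'I_(2 ^ K) -> {ffun 'I_K -> bool})
  (A : 'I_(2 ^ K).-1 -> {set 'I_K}) (f : 'I_(2 ^ K).-1) (q : 'I_(2 ^ K)) : R :=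
  \prod_(k in A f) sgn R (iota q k).

Definition bvec (R : ringType) (K : nat) (iota : 'I_(2 ^ K) -> {ffun 'I_K -> bool})
  (A : 'I_(2 ^ K).-1 -> {set 'I_K}) (q : 'I_(2 ^ K)) : 'cV[R]_((2 ^ K).-1) :=
  \col_f gfq R iota A f q.

Definition nq (n K : nat) (Z : 'I_n -> 'I_(2 ^ K)) (q : 'I_(2 ^ K)) : nat :=
  #|[set i | Z i == q]|.

Definition gmean (R : fieldType) (n L K : nat) (x : 'I_n -> 'cV[R]_L)
  (Z : 'I_n -> 'I_(2 ^ K)) (q : 'I_(2 ^ K)) : 'cV[R]_L :=
  (nq Z q)%:R^-1 *: \sum_(i | Z i == q) x i.

Definition xmean (R : fieldType) (n L : nat) (x : 'I_n -> 'cV[R]_L) : 'cV[R]_L :=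
  n%:R^-1 *: \sum_i x i.

Definition Sxx (R : fieldType) (n L : nat) (x : 'I_n -> 'cV[R]_L) : 'M[R]_L :=
  (n.-1)%:R^-1 *: \sum_i ((x i - xmean x) *m (x i - xmean x)^T).

Definition tau_x (R : fieldType) (n L K : nat) (iota : 'I_(2 ^ K) -> {ffun 'I_K -> bool})
  (A : 'I_(2 ^ K).-1 -> {set 'I_K}) (x : 'I_n -> 'cV[R]_L)
  (Z : 'I_n -> 'I_(2 ^ K)) (f : 'I_(2 ^ K).-1) : 'cV[R]_L :=
  (2 ^ (K - 1))%:R^-1 *: \sum_q (gfq R iota A f q *: gmean x Z q).

(* subvector v[I] and submatrix B[I,J] (indices in increasing order) *)
Definition subv (R : Type) (m : nat) (I : {set 'I_m}) (v : 'cV[R]_m) : 'cV[R]_#|I| :=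
  \col_i v (enum_val i) 0.
Definition subm (R : Type) (m : nat) (I J : {set 'I_m}) (B : 'M[R]_m)
  : 'M[R]_(#|I|, #|J|) :=
  \matrix_(i, j) B (enum_val i) (enum_val j).

(* concatenation \hat\tau_x[I] of the \hat\tau_{x,f}, f in I (increasing) *)
Definition tau_cat (R : Type) (F L : nat) (t : 'I_F -> 'cV[R]_L) (I : {set 'I_F})
  : 'cV[R]_(#|I| * L) :=
  \col_k t (enum_val (mxtens_unindex k).1) (mxtens_unindex k).2 0.

Definition Btilde (R : fieldType) (n K : nat) (iota : 'I_(2 ^ K) -> {ffun 'I_K -> bool})
  (A : 'I_(2 ^ K).-1 -> {set 'I_K}) (Z : 'I_n -> 'I_(2 ^ K)) : 'M[R]_((2 ^ K).-1) :=
  (2 ^ (2 * (K - 1)))%:R^-1 *: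
    \sum_q ((nq Z q)%:R^-1 *: (bvec R iota A q *m (bvec R iota A q)^T)).

(* tiers: tier f = h means f \in F_h (tiers indexed 0..H-1) *)
Definition tierset (F H : nat) (tier : 'I_F -> 'I_H) (h : 'I_H) : {set 'I_F} :=
  [set f | tier f == h].
Definition tierbefore (F H : nat) (tier : 'I_F -> 'I_H) (h : 'I_H) : {set 'I_F} :=
  [set f | (tier f < h)%N].

Definition cvec (R : fieldType) (n K H : nat) (iota : 'I_(2 ^ K) -> {ffun 'I_K -> bool})
  (A : 'I_(2 ^ K).-1 -> {set 'I_K}) (Z : 'I_n -> 'I_(2 ^ K))
  (tier : 'I_(2 ^ K).-1 -> 'I_H) (q : 'I_(2 ^ K)) (h : 'I_H)
  : 'cV[R]_#|tierset tier h| :=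
  let b := bvec R iota A q in
  let B := Btilde R iota A Z in
  if val h == 0%N then subv (tierset tier h) b
  else subv (tierset tier h) b
       - subm (tierset tier h) (tierbefore tier h) B
         *m invmx (subm (tierbefore tier h) (tierbefore tier h) B)
         *m subv (tierbefore tier h) b.

Definition theta_x (R : fieldType) (n L K H : nat) (iota : 'I_(2 ^ K) -> {ffun 'I_K -> bool})
  (A : 'I_(2 ^ K).-1 -> {set 'I_K}) (x : 'I_n -> 'cV[R]_L) (Z : 'I_n -> 'I_(2 ^ K))
  (tier : 'I_(2 ^ K).-1 -> 'I_H) (h : 'I_H) : 'cV[R]_(#|tierset tier h| * L) :=
  (2 ^ (K - 1))%:R^-1 *: \sum_q (cvec R iota A Z tier q h *t gmean x Z q).

Definition W_xx (R : fieldType) (n L K H : nat) (iota : 'I_(2 ^ K) -> {ffun 'I_K -> bool})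
  (A : 'I_(2 ^ K).-1 -> {set 'I_K}) (x : 'I_n -> 'cV[R]_L) (Z : 'I_n -> 'I_(2 ^ K))
  (tier : 'I_(2 ^ K).-1 -> 'I_H) (h : 'I_H) : 'M[R]_(#|tierset tier h| * L) :=
  (2 ^ (2 * (K - 1)))%:R^-1 *:
    \sum_q ((nq Z q)%:R^-1 *:
      ((cvec R iota A Z tier q h *m (cvec R iota A Z tier q h)^T) *t Sxx x)).

Definition M_h (R : fieldType) (n L K H : nat) (iota : 'I_(2 ^ K) -> {ffun 'I_K -> bool})
  (A : 'I_(2 ^ K).-1 -> {set 'I_K}) (x : 'I_n -> 'cV[R]_L) (Z : 'I_n -> 'I_(2 ^ K))
  (tier : 'I_(2 ^ K).-1 -> 'I_H) (h : 'I_H) : R :=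
  ((theta_x iota A x Z tier h)^T *m invmx (W_xx iota A x Z tier h)
     *m theta_x iota A x Z tier h) 0 0.

(* Main.v *)
Require Import Defs.
From HB Require Import structures.
From mathcomp Require Import all_boot all_order all_algebra.
From mathcomp Require Import mxtens.
From mathcomp Require Import lra ring.
Import Order.TTheory GRing.Theory Num.Theory.
Local Open Scope ring_scope.

Section H.
Variable R : realFieldType.

Lemma sgn_prod_mul K (s : 'I_K -> bool) (X Y : {set 'I_K}) :
  \prod_(k in X) sgn R (s k) * \prod_(k in Y) sgn R (s k)
  = \prod_(k | (k \in X) != (k \in Y)) sgn R (s k).
Proof.
rewrite (big_mkcond (fun k => k \in X)) (big_mkcond (fun k => k \in Y)) (big_mkcond (fun k => _ != _)) -big_split.
apply: eq_bigr => k _ /=.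
case: (k \in X); case: (k \in Y); case: (s k) => /=; rewrite ?/sgn ?mulr1 ?mul1r ?mulrNN //. all: by rewrite ?mulr1.
Qed.

Lemma sum_sgn_prod0 K (D : pred 'I_K) k0 : D k0 ->
  \sum_(g : {ffun 'I_K -> bool}) \prod_(k | D k) sgn R (g k) = 0.
Proof.
move=> Dk0.
pose t (g : {ffun 'I_K -> bool}) := [ffun k => if k == k0 then ~~ g k else g k].
have tK : involutive t.
  by move=> g; apply/ffunP => k; rewrite !ffunE; case: eqP => // _; rewrite negbK.
set S := \sum_g _.
have HS : S = - S.
  rewrite {1}/S (reindex_inj (inv_inj tK)) /S -sumrN.
  apply: eq_bigr => g _.
  rewrite (bigD1 k0) //= [in RHS](bigD1 k0) //= ffunE eqxx -mulNr.
  congr (_ * _).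
    by rewrite /sgn; case: (g k0) => /=; rewrite ?opprK.
  by apply: eq_bigr => k /andP[_ /negbTE]; rewrite ffunE => ->.
lra.
Qed.

Lemma orth K (iota : 'I_(2 ^ K) -> {ffun 'I_K -> bool})
  (A : 'I_(2 ^ K).-1 -> {set 'I_K}) :
  bijective iota -> injective A ->
  forall f f', \sum_q gfq R iota A f q * gfq R iota A f' q
    = if f == f' then (2 ^ K)%:R else 0.
Proof.
move=> biota injA f f'.
under eq_bigr do rewrite /gfq sgn_prod_mul.
case: eqP => [<-|ne].
  rewrite (eq_bigr (fun _ => 1)); last first.
    by move=> q _; rewrite big_pred0 // => k; rewrite eqxx.
  by rewrite sumr_const card_ord.
case: (boolP [exists k, (k \in A f) != (k \in A f')]) => [/existsP[k0 Hk]|/existsPn Hn].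
  rewrite -(reindex iota (P := xpredT)
    (F := fun g : {ffun 'I_K -> bool} => \prod_(k | (k \in A f) != (k \in A f')) sgn R (g k))).
    exact: sum_sgn_prod0 Hk.
  exact: onW_bij.
exfalso; apply: ne; apply: injA; apply/setP => k.
by move: (Hn k); rewrite negbK => /eqP.
Qed.

Lemma sum_tens m p (F : 'I_(m * p) -> R) :
  \sum_k F k = \sum_(i < m) \sum_(j < p) F (mxtens_index (i, j)).
Proof.
rewrite pair_big (reindex (@mxtens_index m p)) /=; last first.
  by exists (@mxtens_unindex m p) => k _; [rewrite mxtens_indexK|rewrite mxtens_unindexK].
by apply: eq_bigr => -[i j].
Qed.

Lemma invmx_eq m (M N : 'M[R]_m) : M *m N = 1%:M -> invmx M = N.
Proof.
move=> MN; have [uM _] := mulmx1_unit MN.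
by rewrite -[invmx M]mulmx1 -MN mulmxA mulVmx // mul1mx.
Qed.

Lemma tens11 m p : (1%:M : 'M[R]_m) *t (1%:M : 'M[R]_p) = 1%:M.
Proof.
apply/matrixP => k l.
case: (mxtens_indexP k) => i j; case: (mxtens_indexP l) => i' j'.
rewrite tensmxE !mxE -natrM mulnb; congr (_%:R). by rewrite (inj_eq (can_inj (@mxtens_indexK m p))) xpair_eqE.
Qed.


Lemma quad_tens F L (t : 'I_F -> 'cV[R]_L) (I : {set 'I_F}) (P : 'M[R]_L) :
  ((tau_cat t I)^T *m (1%:M *t P) *m tau_cat t I) 0 0
  = \sum_(f in I) ((t f)^T *m P *m t f) 0 0.
Proof.
rewrite big_enum_val mxE sum_tens; apply: eq_bigr => i _.
rewrite mxE; apply: eq_bigr => j _.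
rewrite [in LHS]mxE [in RHS]mxE sum_tens (bigD1 i) //= [X in (_ + X) * _]big1 ?addr0; last first.
  move=> i2 /negbTE ne; apply: big1 => j2 _.
  by rewrite tensmxE [1%:M _ _]mxE ne mul0r mulr0.
congr (_ * _); last by rewrite /tau_cat mxE mxtens_indexK.
apply: eq_bigr => j' _.
rewrite tensmxE [1%:M _ _]mxE eqxx mul1r !mxE mxtens_indexK //.
Qed.

End H.

Theorem proposition7 (R : realFieldType) (K n L H : nat)
  (iota : 'I_(2 ^ K) -> {ffun 'I_K -> bool})
  (A : 'I_(2 ^ K).-1 -> {set 'I_K})
  (x : 'I_n -> 'cV[R]_L) (Z : 'I_n -> 'I_(2 ^ K))
  (tier : 'I_(2 ^ K).-1 -> 'I_H) :
  (1 <= K)%N ->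
  bijective iota ->
  injective A -> (forall f, A f != set0) ->
  (2 <= n)%N ->
  Sxx x \in unitmx ->
  (forall q, 1 <= nq Z q)%N ->
  (forall h : 'I_H, exists f, tier f = h) ->
  (* balanced design: n_q = n / Q for every q *)
  (forall q, nq Z q * 2 ^ K = n)%N ->
  [/\ (forall q h, cvec R iota A Z tier q h = subv (tierset tier h) (bvec R iota A q)),
      (forall h, theta_x iota A x Z tier h
                 = tau_cat (tau_x iota A x Z) (tierset tier h))
    & (forall h, M_h iota A x Z tier h
                 = n%:R / 4 * \sum_(f in tierset tier h)
                     ((tau_x iota A x Z f)^T *m invmx (Sxx x) *m tau_x iota A x Z f) 0 0)].
Proof.
move=> K1 biota injA nzA n2 Sunit nq1 tiers bal.
set N0 := (n %/ 2 ^ K)%N.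
have K0 : (0 < 2 ^ K)%N by rewrite expn_gt0.
have nqE q : nq Z q = N0 by rewrite /N0 -[X in (X %/ _)%N](bal q) mulnK.
have N0n : (N0 * 2 ^ K)%N = n by rewrite -(nqE (Ordinal K0)) bal.
have sumBB f f' : \sum_q (nq Z q)%:R^-1 * (gfq R iota A f q * gfq R iota A f' q)
   = (N0%:R)^-1 * (if f == f' then (2 ^ K)%:R else 0) :> R.
  rewrite -(@orth R K iota A biota injA f f') mulr_sumr; apply: eq_bigr => q _.
  by rewrite nqE.
have cvecE q h : cvec R iota A Z tier q h = subv (tierset tier h) (bvec R iota A q).
  rewrite /cvec; case: ifP => // _.
  have -> : subm (tierset tier h) (tierbefore tier h) (Btilde R iota A Z) = 0.
    apply/matrixP => i j; rewrite !mxE summxE.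
    under eq_bigr do rewrite !mxE big_ord1 !mxE.
    rewrite sumBB.
    have -> : (enum_val i == enum_val j) = false.
      apply/negbTE; move: (enum_valP i) (enum_valP j); rewrite !inE => /eqP Hi Hj.
      by apply/eqP => E; move: Hj; rewrite -E Hi ltnn.
    by rewrite !mulr0.
  by rewrite !mul0mx subr0.
have thetaE h : theta_x iota A x Z tier h = tau_cat (tau_x iota A x Z) (tierset tier h).
  apply/matrixP => k c; case: (mxtens_indexP k) => i j.
  rewrite /theta_x /tau_cat [in RHS]mxE mxtens_indexK /= [in LHS]mxE summxE /tau_x [in RHS]mxE summxE.
  congr (_ * _); apply: eq_bigr => q _.
  rewrite cvecE [in LHS]mxE mxtens_indexK [in RHS]mxE. rewrite /subv !mxE /=. congr (_ * (_ * _)); f_equal; apply: ord1.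
split => // h; rewrite /M_h thetaE.
set w : R := (2 ^ (2 * (K - 1)))%:R^-1 * ((N0%:R)^-1 * (2 ^ K)%:R).
have WE : W_xx iota A x Z tier h = w *: (1%:M *t Sxx x).
  rewrite /W_xx; move: (Sxx x) => S.
  apply/matrixP => k l; case: (mxtens_indexP k) => i j; case: (mxtens_indexP l) => i' j'.
  rewrite [in LHS]mxE summxE [in RHS]mxE tensmxE.
  under eq_bigr do rewrite cvecE mxE tensmxE mxE big_ord1 !mxE mulrA.
  rewrite -mulr_suml sumBB (inj_eq enum_val_inj) [1%:M i i']mxE /w.
  by case: (i == i'); rewrite /=; ring.
have N0pos : (0 < N0)%N by rewrite -(nqE (Ordinal K0)).
have u0 : (2 ^ (K - 1))%:R != 0 :> R by rewrite pnatr_eq0 expn_eq0.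
have N00 : N0%:R != 0 :> R by rewrite pnatr_eq0 -lt0n.
have wE : w^-1 = n%:R / 4.
  rewrite /w -N0n.
  have -> : (2 ^ K)%N = (2 * 2 ^ (K - 1))%N by rewrite -expnS subn1 prednK.
  have -> : (2 ^ (2 * (K - 1)))%N = (2 ^ (K - 1) * 2 ^ (K - 1))%N by rewrite mul2n -addnn expnD.
  rewrite !natrM; field.
  by rewrite u0 N00.
have w0 : w != 0.
  rewrite /w !mulf_neq0 ?invr_eq0 ?pnatr_eq0 ?expn_eq0 //. by rewrite -lt0n.
rewrite (_ : invmx _ = w^-1 *: (1%:M *t invmx (Sxx x))); last first.
  rewrite WE; apply: (@invmx_eq R _ _ (w^-1 *: (1%:M *t invmx (Sxx x)))).
  rewrite -scalemxAl -scalemxAr scalerA mulfV // scale1r tensmx_mul mulmx1 mulmxV //.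
  exact: tens11.
rewrite -scalemxAr -scalemxAl [in LHS]mxE quad_tens wE //.
Qed.
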